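(* Assume the setting below. There exists a constant $C\geq 0$, depending only on $T$ and $C_0$, such that $$|\widehat v(t_n,x)-\widehat v(t_n,y)|\leq L C|x-y|$$ for all $x,y\in\mathbb R^d$ and all $n=0,\ldots,N$.
   Context: Let $T>0$, $d,p,q\ge1$, let $A\subseteq\mathbb R^q$ be a compact subset of a separable metric space, and let $\mu:[0,T]\times\mathbb R^d\times A\to\mathbb R^d$, $\sigma:[0,T]\times\mathbb R^d\times A\to\mathbb R^{d\times p}$ be continuous with $|\mu(t,x,a)-\mu(s,y,a)|+\|\sigma(t,x,a)-\sigma(s,y,a)\|\leq C_0(|x-y|+|t-s|^{1/2})$ for all $t,s\in[0,T]$, $x,y\in\mathbb R^d$, $a\in A$. Let $\psi:\mathbb R^d\to\mathbb R$ be continuous with $|\psi(x)-\psi(y)|\le L|x-y|$. Let $N\ge1$, $h=T/N$, $t_n=nh$. Let $M\ge2$ and let $(\hat\lambda_i,\hat\xi_i)_{i=1,\ldots,\hat M}$ with $\hat\lambda_i\ge0$, $\hat\xi_i\in\mathbb R^p$ be a cubature rule that integrates exactly, with respect to the standard Gaussian measure $\mathcal N(0,I_p)$ on $\mathbb R^p$, all polynomials of degree $\le 2M-1$ (e.g. the tensor product of the $M$-point Gauss–Hermite rule); in particular $\sum_i\hat\lambda_i=1$, $\sum_i\hat\lambda_i\hat\xi_i=0$, $\sum_i\hat\lambda_i\hat\xi_i\hat\xi_i^\top=I_p$. Define $\widehat v(t_N,x)=\psi(x)$ and, for $n=N-1,\ldots,0$, $\widehat v(t_n,x)=\sup_{a\in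 A}\sum_{i=1}^{\hat M}\hat\lambda_i\,\widehat v\big(t_{n+1},x+\mu(t_n,x,a)h+\sqrt h\,\sigma(t_n,x,a)\hat\xi_i\big)$. *)

(* Defs.v *)
From HB Require Import structures.
From mathcomp Require Import all_boot all_order all_algebra.
From mathcomp Require Import all_classical all_reals all_analysis.
Set Implicit Arguments. Unset Strict Implicit. Unset Printing Implicit Defensive.
Import Order.TTheory GRing.Theory Num.Theory.
Import numFieldNormedType.Exports.
Local Open Scope classical_set_scope.
Local Open Scope ring_scope.

Definition enorm (R : realType) (n : nat) (x : 'cV[R]_n) : R :=
  Num.sqrt (\sum_(i < n) (x i 0) ^+ 2).

Definition fnorm (R : realType) (m n : nat) (S : 'M[R]_(m, n)) : R :=
  Num.sqrt (\sum_(i < m) \sum_(j < n) (S i j) ^+ 2).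

(* moments of the standard 1-d Gaussian: E[Z^k] = 0 for k odd, (k-1)!! for k even *)
Definition gauss_moment (R : realType) (k : nat) : R :=
  if odd k then 0 else (\prod_(i < k./2) (2 * i + 1))%:R.

(* (lam, xi) with Mhat nodes integrates exactly w.r.t. N(0, I_p) all polynomials
   of degree <= deg : by linearity, this means exactness on all monomials
   prod_j z_j^(alpha j) with |alpha| <= deg, whose Gaussian integral is
   prod_j E[Z^(alpha j)]. *)
Definition gauss_cubature (R : realType) (p Mhat deg : nat)
    (lam : 'I_Mhat -> R) (xi : 'I_Mhat -> 'cV[R]_p) : Prop :=
  (forall i, 0 <= lam i) /\
  forall alpha : 'I_p -> nat, (\sum_(j < p) alpha j <= deg)%N ->
    \sum_(i < Mhat) lam i * \prod_(j < p) (xi i j 0) ^+ (alpha j)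
    = \prod_(j < p) gauss_moment R (alpha j).

(* Backward scheme: vhat_rem k = \widehat v(t_{N-k}, .) (k steps remaining). *)
Fixpoint vhat_rem (R : realType) (d p q : nat) (T : R) (N : nat)
    (A : set 'cV[R]_q)
    (mu : R -> 'cV[R]_d -> 'cV[R]_q -> 'cV[R]_d)
    (sigma : R -> 'cV[R]_d -> 'cV[R]_q -> 'M[R]_(d, p))
    (psi : 'cV[R]_d -> R) (Mhat : nat)
    (lam : 'I_Mhat -> R) (xi : 'I_Mhat -> 'cV[R]_p) (k : nat) : 'cV[R]_d -> R :=
  match k with
  | 0 => psi
  | k'.+1 => fun x =>
      let h := T / N%:R in
      let t := (N - k)%:R * h in
      sup [set v | exists2 a, A a &
             v = \sum_(i < Mhat) lam i *
                   vhat_rem T N A mu sigma psi lam xi k'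
                     (x + h *: mu t x a + Num.sqrt h *: (sigma t x a *m xi i))]
  end.

Definition vhat (R : realType) (d p q : nat) (T : R) (N : nat)
    (A : set 'cV[R]_q)
    (mu : R -> 'cV[R]_d -> 'cV[R]_q -> 'cV[R]_d)
    (sigma : R -> 'cV[R]_d -> 'cV[R]_q -> 'M[R]_(d, p))
    (psi : 'cV[R]_d -> R) (Mhat : nat)
    (lam : 'I_Mhat -> R) (xi : 'I_Mhat -> 'cV[R]_p) (n : nat) : 'cV[R]_d -> R :=
  vhat_rem T N A mu sigma psi lam xi (N - n).

(* Main.v *)
Require Import Defs.
From HB Require Import structures.
From mathcomp Require Import all_boot all_order all_algebra.
From mathcomp Require Import all_classical all_reals all_analysis.
From mathcomp Require Import ring lra zify.
Import Order.TTheory GRing.Theory Num.Theory.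
Import numFieldNormedType.Exports.
Local Open Scope classical_set_scope.
Local Open Scope ring_scope.

Lemma prod_ind (R : realType) p (x : 'I_p -> R) (j : 'I_p) :
  \prod_(j' < p) x j' ^+ (j' == j) = x j.
Proof.
rewrite (bigD1 j) //= eqxx expr1 big1 ?mulr1 // => j' /negbTE -> ; exact: expr0.
Qed.

Lemma sum_ind p (j : 'I_p) : (\sum_(j' < p) (j' == j) = 1)%N.
Proof.
rewrite (bigD1 j) //= eqxx big1 // => j' /negbTE -> //.
Qed.

Lemma moments (R : realType) p Mh (lam : 'I_Mh -> R) (xi : 'I_Mh -> 'cV[R]_p) M :
  (2 <= M)%N -> gauss_cubature (2 * M - 1) lam xi ->
  [/\ \sum_(i < Mh) lam i = 1,
      forall j, \sum_(i < Mh) lam i * xi i j 0 = 0 &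
      forall j1 j2, \sum_(i < Mh) lam i * (xi i j1 0 * xi i j2 0) = (j1 == j2)%:R].
Proof.
move=> M2 [_ H].
have h1 : (1 <= 2 * M - 1)%N by lia.
have h2 : (1 + 1 <= 2 * M - 1)%N by lia.
split.
- have := H (fun _ => 0%N) ltac:(by rewrite big1).
  rewrite [X in _ = X -> _]big1; last by move=> j _; rewrite /gauss_moment /= big_ord0.
  move=> <-; rewrite [RHS](eq_bigr lam) // => i _; rewrite big1 ?mulr1 // => j _; exact: expr0.
- move=> j; have := H (fun j' => nat_of_bool (j' == j)).
  rewrite sum_ind => /(_ h1).
  rewrite (bigD1 j) //= eqxx /gauss_moment /= mul0r => E; rewrite -[RHS]E.
  by apply: eq_bigr => i _; rewrite prod_ind.
- move=> j1 j2; have := H (fun j => (nat_of_bool (j == j1) + nat_of_bool (j == j2))%N).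
  rewrite big_split /= !sum_ind => /(_ h2) E.
  have -> : \sum_(i < Mh) lam i * (xi i j1 0 * xi i j2 0) =
     \sum_(i < Mh) lam i * \prod_j xi i j 0 ^+ ((j == j1) + (j == j2))%N.
    by apply: eq_bigr => i _; under eq_bigr do rewrite exprD; rewrite big_split /= !prod_ind.
  rewrite E; case: eqP => [<-|/eqP ne].
    rewrite (bigD1 j1) //= eqxx big1 ?mulr1.
      by rewrite /gauss_moment /= big_ord1.
    by move=> j /negbTE ->; rewrite /gauss_moment /= big_ord0.
  by rewrite (bigD1 j1) //= eqxx (negbTE ne) /gauss_moment /= mul0r.
Qed.

Lemma jensen (R : realType) n (lam e : 'I_n -> R) :
  (forall i, 0 <= lam i) -> \sum_(i < n) lam i = 1 ->
  (\sum_(i < n) lam i * e i) ^+ 2 <= \sum_(i < n) lam i * e i ^+ 2.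
Proof.
move=> l0 l1.
have E c : \sum_(i < n) lam i * (e i - c) ^+ 2 =
   \sum_(i < n) lam i * e i ^+ 2 + (- (2 * c)) * \sum_(i < n) lam i * e i + c ^+ 2 * \sum_(i < n) lam i.
  rewrite !mulr_sumr -!big_split /=; apply: eq_bigr => i _; ring.
have : 0 <= \sum_(i < n) lam i * (e i - \sum_(i < n) lam i * e i) ^+ 2.
  by apply: sumr_ge0 => i _; rewrite mulr_ge0 // sqr_ge0.
rewrite E l1; lra.
Qed.

Lemma enorm2 (R : realType) d (v : 'cV[R]_d) : enorm v ^+ 2 = \sum_(k < d) (v k 0) ^+ 2.
Proof. by rewrite /enorm sqr_sqrtr // sumr_ge0 // => k _; rewrite sqr_ge0. Qed.

Lemma fnorm2 (R : realType) d p (S : 'M[R]_(d, p)) :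
  fnorm S ^+ 2 = \sum_(k < d) \sum_(j < p) (S k j) ^+ 2.
Proof.
by rewrite /fnorm sqr_sqrtr // sumr_ge0 // => k _; rewrite sumr_ge0 // => j _; rewrite sqr_ge0.
Qed.

Lemma quad (R : realType) d p Mh (lam : 'I_Mh -> R) (xi : 'I_Mh -> 'cV[R]_p)
  (H1 : \sum_(i < Mh) lam i = 1)
  (H2 : forall j, \sum_(i < Mh) lam i * xi i j 0 = 0)
  (H3 : forall j1 j2, \sum_(i < Mh) lam i * (xi i j1 0 * xi i j2 0) = (j1 == j2)%:R)
  (u : 'cV[R]_d) (S : 'M[R]_(d, p)) (s : R) :
  \sum_(i < Mh) lam i * enorm (u + s *: (S *m xi i)) ^+ 2 = enorm u ^+ 2 + s ^+ 2 * fnorm S ^+ 2.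
Proof.
under eq_bigr => i _ do rewrite enorm2.
rewrite enorm2 fnorm2.
under eq_bigr => i _ do under eq_bigr => k _ do rewrite !mxE.
under eq_bigr => i _ do rewrite mulr_sumr.
rewrite exchange_big /= mulr_sumr -big_split /=; apply: eq_bigr => k _.
have e1 : \sum_(i < Mh) lam i * (\sum_(j < p) S k j * xi i j 0) = 0.
  under eq_bigr => i _ do rewrite mulr_sumr.
  rewrite exchange_big /= big1 // => j _.
  under eq_bigr => i _ do rewrite mulrCA.
  by rewrite -mulr_sumr H2 mulr0.
have e2 : \sum_(i < Mh) lam i * (\sum_(j < p) S k j * xi i j 0) ^+ 2 = \sum_(j < p) S k j ^+ 2.
  under eq_bigr => i _ do rewrite expr2 mulr_suml.
  under eq_bigr => i _ do under eq_bigr => j _ do rewrite mulr_sumr.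
  under eq_bigr => i _ do rewrite mulr_sumr.
  under eq_bigr => i _ do under eq_bigr => j _ do rewrite mulr_sumr.
  rewrite exchange_big /=; apply: eq_bigr => j _; rewrite exchange_big /=.
  have F j' : \sum_(i < Mh) lam i * (S k j * xi i j 0 * (S k j' * xi i j' 0)) = S k j * S k j' * (j == j')%:R.
    by rewrite -H3 mulr_sumr; apply: eq_bigr => i _; ring.
  under eq_bigr => j' _ do rewrite F.
  rewrite (bigD1 j) //= eqxx mulr1 big1 ?addr0 ?expr2 // => j' ne.
  by rewrite eq_sym (negbTE ne) mulr0.
transitivity (u k 0 ^+ 2 * \sum_(i < Mh) lam i
   + 2 * u k 0 * s * \sum_(i < Mh) lam i * (\sum_(j < p) S k j * xi i j 0)
   + s ^+ 2 * \sum_(i < Mh) lam i * (\sum_(j < p) S k j * xi i j 0) ^+ 2).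
  rewrite !mulr_sumr -!big_split /=; apply: eq_bigr => i _; ring.
by rewrite H1 e1 e2; ring.
Qed.

Lemma diffv (R : realType) d p (x y mx my : 'cV[R]_d) (Sx Sy : 'M[R]_(d, p)) (w : 'cV[R]_p) (h s : R) :
  (x + h *: mx + s *: (Sx *m w)) - (y + h *: my + s *: (Sy *m w)) =
  ((x - y) + h *: (mx - my)) + s *: ((Sx - Sy) *m w).
Proof.
rewrite mulmxBl; apply/matrixP => i j; rewrite !mxE; ring.
Qed.

Lemma ubound2 (R : realType) d (a b : 'cV[R]_d) (h : R) : 0 <= h ->
  enorm (a + h *: b) ^+ 2 <= (1 + h) * enorm a ^+ 2 + (h + h ^+ 2) * enorm b ^+ 2.
Proof.
move=> h0; rewrite !enorm2 !mulr_sumr -big_split /=; apply: ler_sum => k _; rewrite !mxE.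
have := mulr_ge0 h0 (sqr_ge0 (a k 0 - b k 0)); nra.
Qed.

Lemma pow_bound (R : realType) (c h : R) (N : nat) : 0 <= c * h ->
  Num.sqrt (1 + c * h) ^+ N <= expR (c * h * N%:R).
Proof.
move=> ch0.
have r1 : 1 <= Num.sqrt (1 + c * h) by rewrite -{1}sqrtr1 ler_sqrt; lra.
have rr : Num.sqrt (1 + c * h) <= 1 + c * h.
  have E : Num.sqrt (1 + c * h) ^+ 2 = 1 + c * h by rewrite sqr_sqrtr //; lra.
  rewrite -{2}E; move: r1; set r := Num.sqrt _; nra.
rewrite expRM_natr; apply: lerXn2r; rewrite ?nnegrE ?expR_ge0 ?sqrtr_ge0 //.
apply: le_trans rr _; exact: expR_ge1Dx.
Qed.

Lemma sup_hs (R : realType) (I : Type) (P : set I) (f g : I -> R) (K : R) :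
  (forall a, P a -> f a <= g a + K) ->
  has_sup [set v | exists2 a, P a & v = g a] ->
  has_sup [set v | exists2 a, P a & v = f a] /\
  sup [set v | exists2 a, P a & v = f a] <= sup [set v | exists2 a, P a & v = g a] + K.
Proof.
move=> H hs.
have ub := sup_upper_bound hs.
have ne : [set v | exists2 a, P a & v = f a] !=set0.
  case: hs => -[v [a Pa _]] _; by exists (f a), a.
have ubf : ubound [set v | exists2 a, P a & v = f a] (sup [set v | exists2 a, P a & v = g a] + K).
  move=> v [a Pa ->]; apply: le_trans (H a Pa) _; rewrite lerD2r; apply: ub; by exists a.
split; first by split => //; exists (sup [set v | exists2 a, P a & v = g a] + K).
exact: ge_sup.
Qed.

Lemma sup_lip (R : realType) (I : Type) (P : set I) (f g : I -> R) (K : R) :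
  0 <= K -> (forall a, P a -> `|f a - g a| <= K) ->
  `|sup [set v | exists2 a, P a & v = f a] - sup [set v | exists2 a, P a & v = g a]| <= K.
Proof.
move=> K0 H.
have H1 a : P a -> f a <= g a + K.
  by move=> /H; rewrite ler_norml => /andP[_]; lra.
have H2 a : P a -> g a <= f a + K.
  by move=> /H; rewrite ler_norml => /andP[+ _]; lra.
case: (pselect (has_sup [set v | exists2 a, P a & v = g a])) => hg.
  have [hf le1] := @sup_hs _ _ _ _ _ _ H1 hg.
  have [_ le2] := @sup_hs _ _ _ _ _ _ H2 hf.
  rewrite ler_norml; apply/andP; split.
    lra.
  lra.
case: (pselect (has_sup [set v | exists2 a, P a & v = f a])) => hf.
  by have [] := @sup_hs _ _ _ _ _ _ H2 hf.
by rewrite !sup_out // subrr normr0.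
Qed.

Theorem proposition3p3 (R : realType) (T C0 : R) :
  0 < T ->
  exists C : R, 0 <= C /\
  forall (d p q : nat) (A : set 'cV[R]_q)
    (mu : R -> 'cV[R]_d -> 'cV[R]_q -> 'cV[R]_d)
    (sigma : R -> 'cV[R]_d -> 'cV[R]_q -> 'M[R]_(d, p))
    (psi : 'cV[R]_d -> R) (L : R) (N M Mhat : nat)
    (lam : 'I_Mhat -> R) (xi : 'I_Mhat -> 'cV[R]_p),
  (1 <= d)%N -> (1 <= p)%N -> (1 <= q)%N ->
  compact A ->
  {within [set z : R * 'cV[R]_d * 'cV[R]_q | 0 <= z.1.1 <= T /\ A z.2],
     continuous (fun z : R * 'cV[R]_d * 'cV[R]_q => mu z.1.1 z.1.2 z.2)} ->
  {within [set z : R * 'cV[R]_d * 'cV[R]_q | 0 <= z.1.1 <= T /\ A z.2],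
     continuous (fun z : R * 'cV[R]_d * 'cV[R]_q => sigma z.1.1 z.1.2 z.2)} ->
  (forall t s x y a, 0 <= t <= T -> 0 <= s <= T -> A a ->
     enorm (mu t x a - mu s y a) + fnorm (sigma t x a - sigma s y a)
       <= C0 * (enorm (x - y) + Num.sqrt `|t - s|)) ->
  continuous psi ->
  (forall x y, `|psi x - psi y| <= L * enorm (x - y)) ->
  (1 <= N)%N -> (2 <= M)%N ->
  gauss_cubature (2 * M - 1) lam xi ->
  forall (n : nat) (x y : 'cV[R]_d), (n <= N)%N ->
    `|vhat T N A mu sigma psi lam xi n x - vhat T N A mu sigma psi lam xi n y|
      <= L * C * enorm (x - y).
Proof.
move=> T0; pose c := 1 + 2 * C0 ^+ 2 + T * C0 ^+ 2.
have c0 : 0 <= c by rewrite /c; have := sqr_ge0 C0; nra.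
exists (expR (c * T)); split; first exact: expR_ge0.
move=> d p q A mu sigma psi L N M Mh lam xi d1 p1 q1 _ _ _ Hlip _ Hpsi N1 M2 Hcub.
have [H1 H2 H3] := @moments _ _ _ _ _ _ M2 Hcub.
have lam0 := Hcub.1.
have L0 : 0 <= L.
  have := Hpsi 0 (const_mx 1).
  have : 0 < enorm (0 - const_mx 1 : 'cV[R]_d).
    rewrite /enorm sqrtr_gt0 (eq_bigr (fun _ => 1)); last by move=> k _; rewrite !mxE; ring.
    by rewrite sumr_const card_ord ltr0n.
  move=> Ep; have := normr_ge0 (psi 0 - psi (const_mx 1)); nra.
pose h := T / N%:R.
have h0 : 0 <= h by rewrite /h divr_ge0 //; lra.
have hT : h <= T.
  rewrite /h ler_pdivrMr ?ltr0n //; have : 1 <= N%:R :> R by rewrite ler1n.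
  nra.
pose r := Num.sqrt (1 + c * h).
have r1 : 1 <= r by rewrite /r -{1}sqrtr1 ler_sqrt; nra.
have claim : forall k, (k <= N)%N -> forall x y,
    `|vhat_rem T N A mu sigma psi lam xi k x - vhat_rem T N A mu sigma psi lam xi k y|
      <= L * r ^+ k * enorm (x - y).
  elim=> [|k IH] kN x y; first by rewrite expr0 mulr1; exact: Hpsi.
  have kN' : (k <= N)%N by apply: ltnW.
  cbn [vhat_rem]; rewrite -/h.
  set t := (N - k.+1)%:R * h.
  set V := vhat_rem T N A mu sigma psi lam xi k.
  have t0 : 0 <= t <= T.
    apply/andP; split; first by rewrite mulr_ge0.
    have NT : N%:R * h = T by rewrite /h mulrC divfK // pnatr_eq0 -lt0n.
    rewrite -[X in _ <= X]NT; apply: ler_wpM2r => //; by rewrite ler_nat leq_subr.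
  have r0 : 0 <= r by apply: le_trans r1; exact: ler01.
  have en0 : 0 <= enorm (x - y) by exact: sqrtr_ge0.
  apply: sup_lip; first by rewrite mulr_ge0 // mulr_ge0 // exprn_ge0.
  move=> a Aa.
  rewrite -sumrB; under eq_bigr => i _ do rewrite -mulrBr.
  apply: le_trans (ler_norm_sum _ _ _) _.
  pose e i := enorm ((x + h *: mu t x a + Num.sqrt h *: (sigma t x a *m xi i))
                   - (y + h *: mu t y a + Num.sqrt h *: (sigma t y a *m xi i))).
  apply: le_trans (_ : _ <= \sum_(i < Mh) lam i * (L * r ^+ k * e i)) _.
    apply: ler_sum => i _; rewrite normrM ger0_norm //; apply: ler_wpM2l => //; exact: IH.
  rewrite (eq_bigr (fun i => L * r ^+ k * (lam i * e i))); last by move=> i _; ring.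
  rewrite -mulr_sumr.
  have -> : L * r ^+ k.+1 * enorm (x - y) = L * r ^+ k * (r * enorm (x - y)) by rewrite exprSr; ring.
  apply: ler_wpM2l; first by rewrite mulr_ge0 // exprn_ge0.
  have Hsq : (\sum_(i < Mh) lam i * e i) ^+ 2 <= (r * enorm (x - y)) ^+ 2.
    apply: le_trans (@jensen _ _ lam e lam0 H1) _.
    rewrite /e; under eq_bigr => i _ do rewrite diffv.
    have r2 : r ^+ 2 = 1 + c * h by rewrite /r sqr_sqrtr //; nra.
    rewrite quad // (sqr_sqrtr h0) exprMn r2.
    have hm := Hlip t t x y a t0 t0 Aa.
    rewrite subrr normr0 sqrtr0 addr0 in hm.
    have := @ubound2 _ _ (x - y) (mu t x a - mu t y a) h h0.
    have m0 : 0 <= enorm (mu t x a - mu t y a) by exact: sqrtr_ge0.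
    have f0 : 0 <= fnorm (sigma t x a - sigma t y a) by exact: sqrtr_ge0.
    move: hm m0 f0.
    set m := enorm (mu t x a - mu t y a).
    set f := fnorm (sigma t x a - sigma t y a).
    set en := enorm (x - y).
    set u2 := enorm _ ^+ 2.
    move=> hm m0 f0 hu.
    have m2 : m ^+ 2 <= C0 ^+ 2 * en ^+ 2 by nra.
    have f2 : f ^+ 2 <= C0 ^+ 2 * en ^+ 2 by nra.
    have q1h : 0 <= h * (C0 ^+ 2 * en ^+ 2 - m ^+ 2) by rewrite mulr_ge0 // subr_ge0.
    have q2h : 0 <= h ^+ 2 * (C0 ^+ 2 * en ^+ 2 - m ^+ 2) by rewrite mulr_ge0 ?exprn_ge0 // subr_ge0.
    have q3h : 0 <= h * (C0 ^+ 2 * en ^+ 2 - f ^+ 2) by rewrite mulr_ge0 // subr_ge0.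
    have q4h : 0 <= h * (T - h) * (C0 ^+ 2 * en ^+ 2).
      have Th : 0 <= T - h by lra.
      apply: mulr_ge0; [exact: mulr_ge0 | apply: mulr_ge0; exact: sqr_ge0].
    rewrite /c; nra.
  have s0 : 0 <= \sum_(i < Mh) lam i * e i.
    by apply: sumr_ge0 => i _; rewrite mulr_ge0 // sqrtr_ge0.
  have := mulr_ge0 r0 en0; nra.
move=> n x y nN; rewrite /vhat.
apply: le_trans (claim _ (leq_subr _ _) x y) _.
apply: ler_wpM2r; first exact: sqrtr_ge0.
apply: ler_wpM2l => //.
apply: le_trans (ler_weXn2l r1 (leq_subr n N)) _.
have -> : c * T = c * h * N%:R by rewrite /h mulrA divfK // pnatr_eq0 -lt0n.
by apply: pow_bound; rewrite mulr_ge0.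
Qed.
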